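(* Let $\mathcal{H}_1,\mathcal{H}_2$ be hypothesis classes and $\mathcal{H}=\mathcal{H}_1\cdot\mathcal{H}_2$. Then for all integers $t\ge0$, $\mathcal{S}(\mathcal{H},t)\le\mathcal{S}(\mathcal{H}_1,t)\cdot\mathcal{S}(\mathcal{H}_2,t)$.
   Context: Hypotheses are maps $\mathcal{X}\to\{-1,+1\}$; $\mathcal{H}_1\cdot\mathcal{H}_2=\{x\mapsto h_1(x)h_2(x):h_1\in\mathcal{H}_1,h_2\in\mathcal{H}_2\}$. A depth-$t$ $\mathcal{X}$-valued tree $\mathbf{x}$ is a sequence of maps $\mathbf{x}_s:\{\pm1\}^{s-1}\to\mathcal{X}$, $s=1,\dots,t$; write $\mathbf{x}_s(\epsilon)=\mathbf{x}_s(\epsilon_1,\dots,\epsilon_{s-1})$. $S(\mathcal{H},\mathbf{x})=\{\epsilon\in\{\pm1\}^t:\exists h\in\mathcal{H},\ \epsilon_s=h(\mathbf{x}_s(\epsilon))\ \forall s\le t\}$; $\mathcal{S}(\mathcal{H},t)=\max_{\mathbf{x}}|S(\mathcal{H},\mathbf{x})|$ over depth-$t$ trees for $t\ge1$, and $\mathcal{S}(\mathcal{H},0)=1$ if $\mathcal{H}\ne\emptyset$, $0$ otherwise. *)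

(* Defs.v *)
From mathcomp Require Import all_boot.
From mathcomp Require Import boolp.
Set Implicit Arguments. Unset Strict Implicit. Unset Printing Implicit Defensive.

(* Labels {-1,+1} are encoded by bool:  b : bool stands for (-1)^b,
   i.e. false = +1, true = -1.  Under this encoding the product of two
   labels is exclusive or (addb). *)
Definition sign_mul (a b : bool) : bool := addb a b.

Definition hclass (X : Type) := (X -> bool) -> Prop.

Definition prod_class (X : Type) (H1 H2 : hclass X) : hclass X :=
  fun h => exists h1 h2, H1 h1 /\ H2 h2 /\ h = (fun x => sign_mul (h1 x) (h2 x)).

(* An X-valued tree: the node reached after the sign prefix (eps_1,...,eps_{s-1})
   is tr [:: eps_1; ...; eps_{s-1}].  A depth-t tree is such a map restricted to
   prefixes of length < t (x_s(eps) = tr (take (s-1) eps)). *)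
Definition xtree (X : Type) := seq bool -> X.

(* S(H, x): sign sequences eps in {+-1}^t realised along the tree by some h in H.
   With 0-based index i = s-1:  eps_i = h (x (eps_0..eps_{i-1})). *)
Definition realized (X : Type) (H : hclass X) (t : nat) (tr : xtree X)
  (eps : t.-tuple bool) : Prop :=
  exists h, H h /\ forall i : 'I_t, tnth eps i = h (tr (take i eps)).

Definition Sset (X : Type) (H : hclass X) (t : nat) (tr : xtree X) : {set t.-tuple bool} :=
  [set eps | `[< realized H tr eps >] ].

(* S(H, t): for t >= 1 the maximum of |S(H,x)| over depth-t trees x
   (values lie in [0, 2^t], so the max is a finite max over attained values;
   it is 0 if there is no tree, i.e. X empty); S(H,0) = 1 if H is nonempty, else 0. *)
Definition Sdim (X : Type) (H : hclass X) (t : nat) : nat :=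
  if t is 0 then (if `[< exists h, H h >] then 1 else 0)
  else \max_(n < (2 ^ t).+1 | `[< exists tr : xtree X, #|Sset H t tr| = n >]) n.

(* Main.v *)
Require Import Defs.
From mathcomp Require Import all_boot.
From mathcomp Require Import zify.
From mathcomp Require Import boolp.

Section S.
Variable X : Type.

Definition restr (H : hclass X) (x0 : X) (b : bool) : hclass X :=
  fun h => H h /\ h x0 = b.
Definition subtr (tr : xtree X) (b : bool) : xtree X := fun s => tr (b :: s).
Definition joint (x0 : X) (t1 t2 : xtree X) : xtree X :=
  fun s => match s with [::] => x0 | b :: s' => if b then t1 s' else t2 s' end.

Lemma realized_cons (H : hclass X) t tr b (e : t.-tuple bool) :
  realized H tr [tuple of b :: e] <-> realized (restr H (tr [::]) b) (subtr tr b) e.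
Proof.
split.
- move=> [h [Hh Hi]]; exists h; split; first split => //.
  + by have := Hi ord0; rewrite (tnth_nth b) /= => ->.
  + move=> j; have := Hi (lift ord0 j); rewrite tnthS => ->.
    by rewrite /subtr /=.
- move=> [h [[Hh Hb] Hi]]; exists h; split => // i.
  case: (unliftP ord0 i) => [j ->|->].
  + by rewrite tnthS Hi.
  + by rewrite (tnth_nth b) /= Hb.
Qed.

Lemma card_split (H : hclass X) t tr :
  #|Sset H t.+1 tr| = #|Sset (restr H (tr [::]) true) t (subtr tr true)|
                    + #|Sset (restr H (tr [::]) false) t (subtr tr false)|.
Proof.
have E : forall b, Sset H t.+1 tr :&: [set y : t.+1.-tuple bool | thead y == b]
   = (fun e : t.-tuple bool => [tuple of b :: e]) @: Sset (restr H (tr [::]) b) t (subtr tr b).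
  move=> b; apply/setP => y; case/tupleP: y => b' e.
  rewrite !inE /= theadE; apply/idP/imsetP.
  - case/andP => /asboolP R /eqP Eb; subst b'; exists e => //.
    by rewrite inE; apply/asboolP; apply/realized_cons.
  - case=> e0; rewrite inE => /asboolP R Ey.
    move/(congr1 val): Ey => /= [Eb /val_inj Ee].
    subst; rewrite eqxx andbT; apply/asboolP; exact/realized_cons.
have inj : forall b, injective (fun e : t.-tuple bool => [tuple of b :: e]).
  by move=> b e1 e2 /(congr1 val) [] /val_inj.
rewrite -(cardsID [set y : t.+1.-tuple bool | thead y == true] (Sset H t.+1 tr)).
rewrite E (card_imset _ (inj true)).
congr (_ + _).
rewrite -(card_imset _ (inj false)) -E; apply: eq_card => y.
by rewrite !inE andbC; case: (thead y).
Qed.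

Lemma card_le1 (H : hclass X) tr : #|Sset H 0 tr| <= 1.
Proof.
apply: leq_trans (max_card _) _.
by rewrite card_tuple.
Qed.

Lemma card_le2 (H : hclass X) t tr : #|Sset H t tr| <= 2 ^ t.
Proof.
by apply: leq_trans (max_card _) _; rewrite card_tuple card_bool.
Qed.

Lemma Sdim_ge (H : hclass X) t tr : #|Sset H t tr| <= Sdim H t.
Proof.
case: t tr => [|t] tr /=.
- case: (posnP #|Sset H 0 tr|) => [-> //|].
  case/card_gt0P => e; rewrite inE => /asboolP [h [Hh _]].
  have -> : `[< exists h, H h >] = true by apply/asboolP; exists h.
  exact: card_le1.
- have Hlt : #|Sset H t.+1 tr| < (2 ^ t.+1).+1 by rewrite ltnS card_le2.
  apply: (@leq_bigmax_cond _ _ (fun n : 'I__ => nat_of_ord n) (Ordinal Hlt)).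
  by apply/asboolP; exists tr.
Qed.

Lemma Sdim_attain (H : hclass X) t (x0 : X) : exists tr, #|Sset H t tr| = Sdim H t.
Proof.
case: t => [|t] /=.
- exists (fun _ => x0).
  case: (asboolP (exists h, H h)) => [[h Hh]|Hn].
  + apply/eqP; rewrite eqn_leq card_le1 card_gt0; apply/set0Pn.
    exists [tuple]; rewrite inE; apply/asboolP; exists h; split => // [[]] //.
  + apply/eqP; rewrite cards_eq0; apply/eqP/setP => e; rewrite !inE.
    by apply/asboolP => [[h [Hh _]]]; apply: Hn; exists h.
- set P := (fun n : 'I_(2 ^ t.+1).+1 => `[< exists tr : xtree X, #|Sset H t.+1 tr| = n >]).
  have Hlt : #|Sset H t.+1 (fun _ => x0)| < (2 ^ t.+1).+1 by rewrite ltnS card_le2.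
  have : 0 < #|P|.
    by apply/card_gt0P; exists (Ordinal Hlt); rewrite unfold_in; apply/asboolP; exists (fun _ => x0).
  move/(eq_bigmax_cond (fun n : 'I__ => nat_of_ord n)) => [i0 Pi0 Ei0].
  move: Pi0; rewrite unfold_in => /asboolP [tr Etr]; exists tr.
  rewrite Etr -Ei0; apply: eq_bigl => i; by rewrite unfold_in.
Qed.

Lemma combine (H : hclass X) x0 t :
  Sdim (restr H x0 true) t + Sdim (restr H x0 false) t <= Sdim H t.+1.
Proof.
have [trT ET] := Sdim_attain (restr H x0 true) t x0.
have [trF EF] := Sdim_attain (restr H x0 false) t x0.
have := Sdim_ge H t.+1 (joint x0 trT trF).
by rewrite card_split /= -ET -EF.
Qed.

Definition hunion (A B : hclass X) : hclass X := fun h => A h \/ B h.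

Lemma Sset_mono (A B : hclass X) t tr : (forall h, A h -> B h) ->
  #|Sset A t tr| <= #|Sset B t tr|.
Proof.
move=> AB; apply: subset_leq_card; apply/subsetP => e; rewrite !inE.
move/asboolP => [h [Ah Hi]]; apply/asboolP; exists h; split => //; exact: AB.
Qed.

Lemma Sset_union (A B : hclass X) t tr :
  #|Sset (hunion A B) t tr| <= #|Sset A t tr| + #|Sset B t tr|.
Proof.
apply: leq_trans (_ : #|Sset A t tr :|: Sset B t tr| <= _); last first.
  by rewrite cardsU leq_subr.
apply: subset_leq_card; apply/subsetP => e; rewrite !inE.
move/asboolP => [h [[Ah|Bh] Hi]]; apply/orP; [left|right]; apply/asboolP; by exists h.
Qed.

Lemma main_tree t : forall (H1 H2 : hclass X) tr,
  #|Sset (prod_class H1 H2) t tr| <= Sdim H1 t * Sdim H2 t.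
Proof.
elim: t => [|t IH] H1 H2 tr.
- case: (posnP #|Sset (prod_class H1 H2) 0 tr|) => [-> //|].
  case/card_gt0P => e; rewrite inE => /asboolP [h [[h1 [h2 [H1h [H2h _]]]] _]].
  rewrite /Sdim.
  have -> : `[< exists h, H1 h >] = true by apply/asboolP; exists h1.
  have -> : `[< exists h, H2 h >] = true by apply/asboolP; exists h2.
  exact: card_le1.
- set x0 := tr [::].
  have step : forall b, #|Sset (restr (prod_class H1 H2) x0 b) t (subtr tr b)| <=
     Sdim (restr H1 x0 true) t * Sdim (restr H2 x0 (addb true b)) t +
     Sdim (restr H1 x0 false) t * Sdim (restr H2 x0 (addb false b)) t.
    move=> b.
    apply: leq_trans (_ : #|Sset (hunion (prod_class (restr H1 x0 true) (restr H2 x0 (addb true b)))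
                                         (prod_class (restr H1 x0 false) (restr H2 x0 (addb false b)))) t (subtr tr b)| <= _).
      apply: Sset_mono => h [[h1 [h2 [H1h [H2h ->]]]] Eb].
      rewrite /sign_mul in Eb.
      case E1: (h1 x0); [left|right]; exists h1, h2; (do 2 split => //);
        split => //; rewrite -Eb E1 /=; by case: (h2 x0).
    apply: leq_trans (Sset_union _ _ _ _) _.
    by apply: leq_add; apply: IH.
  rewrite card_split -/x0.
  have c1 := combine H1 x0 t. have c2 := combine H2 x0 t.
  apply: leq_trans (leq_add (step true) (step false)) _.
  apply: leq_trans (leq_mul c1 c2); rewrite /=.
  rewrite mulnDl !mulnDr.
  set a := Sdim (restr H1 x0 true) t. set b := Sdim (restr H1 x0 false) t.
  set c := Sdim (restr H2 x0 true) t. set d := Sdim (restr H2 x0 false) t.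
  simpl addb; apply/leP; lia.
Qed.

End S.

Theorem mainTheorem15 (X : Type) (H1 H2 : hclass X) (t : nat) :
  Sdim (prod_class H1 H2) t <= Sdim H1 t * Sdim H2 t.
Proof.
case: t => [|t].
- rewrite /Sdim; case: (asboolP (exists h, prod_class H1 H2 h)) => // [[h [h1 [h2 [A [B _]]]]]].
  have -> : `[< exists h, H1 h >] = true by apply/asboolP; exists h1.
  by have -> : `[< exists h, H2 h >] = true by apply/asboolP; exists h2.
- rewrite {1}/Sdim; apply/bigmax_leqP => i /asboolP [tr <-].
  exact: main_tree.
Qed.
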